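(* Consider Setting B with the regular nodes running Algorithm 2, and suppose $\{\mathcal G[k]\}_{k\ge0}$ is jointly strongly $(3f+1)$-robust w.r.t. $\mathcal S$, with $T\in\mathbb N_+$ the interval length from that definition. Then for every $f$-total Byzantine adversarial set and behavior, and every $i\in\mathcal R$: $$\tau_i[k]\neq\omega\ \text{ for all }k\ge (N-|\mathcal S|)T,\qquad\text{and}\qquad \tau_i[k]\le 2(N-|\mathcal S|)T\ \text{ for all }k\ge (N-|\mathcal S|)T.$$
   Context: Setting B. Scalar system $x[k+1]=ax[k]$, $a\in\mathbb R$, monitored by nodes $\mathcal V=\{1,\dots,N\}$ with measurements $y_i[k]=c_ix[k]$, $c_i\in\mathbb R$. Source set $\mathcal S=\{i\in\mathcal V:c_i\neq0\}$. Time-varying directed graphs $\mathcal G[k]=(\mathcal V,\mathcal E[k])$, $\mathcal N_i[k]=\{l\ne i:(l,i)\in\mathcal E[k]\}$; the union graph over an interval has the union of the edge sets. An unknown set $\mathcal A\subseteq\mathcal V$ of adversarial nodes with $|\mathcal A|\le f$ ($f$-total model; $\mathcal A$ may intersect $\mathcal S$); $\mathcal R=\mathcal V\setminus\mathcal A$ are regular. Adversaries are Byzantine: at each time they may send arbitrary, possibly different values (of both estimate and freshness index) to different out-neighbors, or send nothing, and may collude. At each time $k$, each node $l$ sends to its out-neighbors a pair (estimate, freshness index); regular $l$ sends its true $(\hat x_l[k],\tau_l[k])$. Algorithm 2 (executed by regular nodes). Regular source $i\in\mathcal S$: $\tau_i[k]=0$ for all $k$ and $\hat x_i[k+1]=a\hat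 x_i[k]+l_i(y_i[k]-c_i\hat x_i[k])$ with observer gain $l_i$. Regular non-source $i$: keeps $\hat x_i[k]$ (arbitrary initial), $\tau_i[k]\in\mathbb N\cup\{\omega\}$ with $\tau_i[0]=\omega$, and a list $\mathcal M_i$ of distinct node labels (initially empty, at most $2f+1$ entries, stored in $2f+1$ slots) with, for each $l\in\mathcal M_i$, a stored estimate $v_{i,l}$, stored index $d_{i,l}\in\mathbb N$ and time stamp $\phi_{i,l}$. At time $k$ let $\mathcal J_i[k]$ be the set of $l\in\mathcal N_i[k]$ whose reported index $\tau_l[k]$ lies in $\mathbb N$ and satisfies $\tau_l[k]\le k$. ''Appending $l$ at time $k$'' means: put $l$ in $\mathcal M_i$ (if absent), set $v_{i,l}=\hat x_l[k]$, $d_{i,l}=\tau_l[k]$ (reported values), $\phi_{i,l}=k$. Filtering update (F) at time $k$ (requires $|\mathcal M_i|=2f+1$): set $\tau_i[k+1]=\max_{l\in\mathcal M_i}d_{i,l}+1$; form $\bar x_{i,l}[k]=a^{k-\phi_{i,l}}v_{i,l}$ for $l\in\mathcal M_i$; discard the $f$ largest and $f$ smallest of these $2f+1$ values, call the remaining one $\bar x_i[k]$, and set $\hat x_i[k+1]=a\bar x_i[k]$. Case $\tau_i[k]=\omega$: let $\mathcal J'=\mathcal J_i[k]\setminus\mathcal M_i$. If $|\mathcal M_i|+|\mathcal J'|<2f+1$, append every $l\in\mathcal J'$, set $\tau_i[k+1]=\omega$ and $\hat x_i[k+1]=a\hat x_i[k]$. Otherwise append the $2f+1-|\mathcal M_i|$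 nodes of $\mathcal J'$ with smallest reported indices (ties broken arbitrarily) and perform (F). Case $\tau_i[k]\ne\omega$: for each $l\in\mathcal J_i[k]\cap\mathcal M_i$ with reported $\tau_l[k]<d_{i,l}$, append $l$ (refreshing its entries); then rank the nodes of $\mathcal M_i\cup(\mathcal J_i[k]\setminus\mathcal M_i)$ by index ($d_{i,l}$ for $l\in\mathcal M_i$, reported $\tau_l[k]$ otherwise), keep the $2f+1$ with smallest index (ties arbitrary), appending newcomers and deleting dropped nodes (a retained node keeps its storage slot; a newcomer occupies the slot of a dropped node), and perform (F). In all cases, after the step every stored $d_{i,l}$ is incremented by $1$, and $\mathcal M_i$, $v$, $\phi$ carry over to time $k+1$. Definitions. For a graph $\mathcal G=(\mathcal V,\mathcal E)$ with in-neighbor sets $\mathcal N_i$ and $r\in\mathbb N_+$, a set $\mathcal C\subseteq\mathcal V$ is $r$-reachable if some $i\in\mathcal C$ has $|\mathcal N_i\setminus\mathcal C|\ge r$. $\mathcal G$ is strongly $r$-robust w.r.t. $\mathcal S\subset\mathcal V$ if every nonempty $\mathcal C\subseteq\mathcal V\setminus\mathcal S$ is $r$-reachable. A sequence $\{\mathcal G[k]\}$ is jointly strongly $r$-robust w.r.t. $\mathcal S$ if there is $T\in\mathbb N_+$ such that the union graph over $[kT,(k+1)T-1]$ is strongly $r$-robust w.r.t. $\mathcal S$ for every $k\in\mathbb N$. *)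

(* Defs.v *)
From HB Require Import structures.
From mathcomp Require Import all_boot all_order all_algebra.
Set Implicit Arguments. Unset Strict Implicit. Unset Printing Implicit Defensive.
Import Order.TTheory GRing.Theory Num.Theory.
Local Open Scope ring_scope.

(* A directed graph on nodes 'I_N is a relation E; E l i means (l,i) is an edge. *)
Definition in_nbrs (N : nat) (E : rel 'I_N) (i : 'I_N) : {set 'I_N} :=
  [set l | (l != i) && E l i].

Definition union_graph (N : nat) (G : nat -> rel 'I_N) (k0 len : nat) : rel 'I_N :=
  fun l i => has (fun k => G k l i) (iota k0 len).

Definition r_reachable (N : nat) (E : rel 'I_N) (C : {set 'I_N}) (r : nat) : bool :=
  [exists i in C, (r <= #|in_nbrs E i :\: C|)%N].

Definition strongly_robust (N : nat) (E : rel 'I_N) (S : {set 'I_N}) (r : nat) : Prop :=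
  forall C : {set 'I_N}, C != set0 -> C \subset ~: S -> r_reachable E C r.

Definition jointly_strongly_robust_with (N : nat) (G : nat -> rel 'I_N)
    (S : {set 'I_N}) (r T : nat) : Prop :=
  (0 < T)%N /\ forall m : nat, strongly_robust (union_graph G (m * T) T) S r.

(* Freshness indices live in option nat; None stands for omega. *)
Definition message (R : Type) := option (R * option nat).

(* Memory of a non-source node: for each label l, either absent (None) or
   Some (v_{i,l}, d_{i,l}, phi_{i,l}). *)
Definition memory (R : Type) (N : nat) := 'I_N -> option (R * nat * nat).

Section Alg.
Variables (R : realFieldType) (N : nat).

Definition ent_v (e : option (R * nat * nat)) : R :=
  if e is Some (v, _, _) then v else 0.
Definition ent_d (e : option (R * nat * nat)) : nat :=
  if e is Some (_, d, _) then d else 0%N.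
Definition ent_phi (e : option (R * nat * nat)) : nat :=
  if e is Some (_, _, p) then p else 0%N.

Definition dom (m : memory R N) : {set 'I_N} := [set l | m l != None].

Definition incr (m : memory R N) : memory R N :=
  fun l => if m l is Some (v, d, p) then Some (v, d.+1, p) else None.

Definition append (m : memory R N) (B : {set 'I_N}) (rv : 'I_N -> R)
    (rd : 'I_N -> nat) (k : nat) : memory R N :=
  fun l => if l \in B then Some (rv l, rd l, k) else m l.

Definition reported (msg : message R) : option (R * nat) :=
  if msg is Some (v, Some d) then Some (v, d) else None.

Definition rep_v (msg : message R) : R :=
  if reported msg is Some (v, _) then v else 0.
Definition rep_d (msg : message R) : nat :=
  if reported msg is Some (_, d) then d else 0%N.

Definition Jset (G : nat -> rel 'I_N) (msgs : nat -> 'I_N -> 'I_N -> message R)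
    (k : nat) (i : 'I_N) : {set 'I_N} :=
  [set l in in_nbrs (G k) i |
     if reported (msgs k l i) is Some (_, d) then (d <= k)%N else false].

(* discard the f largest and f smallest of 2f+1 values: the remaining one *)
Definition trimmed (f : nat) (s : seq R) : R := nth 0 (sort (fun x y => x <= y) s) f.

Definition filt_tau (m1 : memory R N) : option nat :=
  Some (\max_(l in dom m1) ent_d (m1 l)).+1.
Definition filt_x (a : R) (f k : nat) (m1 : memory R N) : R :=
  a * trimmed f [seq a ^+ (k - ent_phi (m1 l)) * ent_v (m1 l) | l <- enum (dom m1)].

(* one step of a regular non-source node at time k: from state (x, t, m) to
   (x', t', m'); J is J_i[k], rv / rd the reported estimates / indices.
   Ties are broken arbitrarily, hence a relation. *)
Definition nonsource_step (a : R) (f k : nat) (J : {set 'I_N})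
    (rv : 'I_N -> R) (rd : 'I_N -> nat)
    (x : R) (t : option nat) (m : memory R N)
    (x' : R) (t' : option nat) (m' : memory R N) : Prop :=
  match t with
  | None =>
      let J' := J :\: dom m in
      if (#|dom m| + #|J'| < (2 * f).+1)%N then
        [/\ m' = incr (append m J' rv rd k), t' = None & x' = a * x]
      else exists B : {set 'I_N},
        [/\ B \subset J', #|B| = ((2 * f).+1 - #|dom m|)%N,
            {in B & J' :\: B, forall l l', (rd l <= rd l')%N} &
            let m1 := append m B rv rd k in
            [/\ m' = incr m1, t' = filt_tau m1 & x' = filt_x a f k m1]]
  | Some _ =>
      let m0 := append m [set l in J :&: dom m | (rd l < ent_d (m l))%N] rv rd k in
      let C := dom m0 :|: J in
      let idx l := if l \in dom m0 then ent_d (m0 l) else rd l in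
      exists K : {set 'I_N},
        [/\ K \subset C, #|K| = (2 * f).+1,
            {in K & C :\: K, forall l l', (idx l <= idx l')%N} &
            let m1 : memory R N := fun l =>
              if l \in K then (if l \in dom m0 then m0 l else Some (rv l, rd l, k))
              else None in
            [/\ m' = incr m1, t' = filt_tau m1 & x' = filt_x a f k m1]]
  end.

(* An execution of Algorithm 2 by the regular nodes (nodes not in Adv), with
   arbitrary (Byzantine) messages msgs k l i sent by l to i at time k from
   adversarial nodes. xs is the true state, xh / tau / mem the node variables. *)
Definition execution (f : nat) (a : R) (c L : 'I_N -> R) (G : nat -> rel 'I_N)
    (Adv : {set 'I_N}) (xs : nat -> R)
    (msgs : nat -> 'I_N -> 'I_N -> message R)
    (xh : 'I_N -> nat -> R) (tau : 'I_N -> nat -> option nat)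
    (mem : 'I_N -> nat -> memory R N) : Prop :=
  [/\ (forall k, xs k.+1 = a * xs k),
      (forall k l i, l \notin Adv -> l \in in_nbrs (G k) i ->
          msgs k l i = Some (xh l k, tau l k)),
      (forall i, i \notin Adv -> c i != 0 -> forall k,
          tau i k = Some 0%N /\
          xh i k.+1 = a * xh i k + L i * (c i * xs k - c i * xh i k)),
      (forall i, i \notin Adv -> c i == 0 ->
          tau i 0%N = None /\ mem i 0%N = (fun _ => None)) &
      (forall i, i \notin Adv -> c i == 0 -> forall k,
          nonsource_step a f k (Jset G msgs k i)
            (fun l => rep_v (msgs k l i)) (fun l => rep_d (msgs k l i))
            (xh i k) (tau i k) (mem i k) (xh i k.+1) (tau i k.+1) (mem i k.+1))].

End Alg.

Definition sources (R : realFieldType) (N : nat) (c : 'I_N -> R) : {set 'I_N} :=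
  [set i | c i != 0].

(* Main.v *)
Require Import Defs.
From HB Require Import structures.
From mathcomp Require Import all_boot all_order all_algebra.
Set Implicit Arguments. Unset Strict Implicit. Unset Printing Implicit Defensive.
From mathcomp Require Import zify.
Import Order.TTheory GRing.Theory Num.Theory.
Local Open Scope ring_scope.
Section Gen.
Variables (R : realFieldType) (N : nat) (a : R) (f : nat).
Local Open Scope nat_scope.
Implicit Types (m : memory R N).

Lemma in_dom m l : (l \in dom m) = (m l != None).
Proof. by rewrite inE. Qed.

Lemma dom_incr m : dom (incr m) = dom m.
Proof. by apply/setP => l; rewrite !inE /incr; case: (m l) => [[[v d] p]|]. Qed.

Lemma ent_d_incr m l : ent_d (incr m l) = if m l is Some _ then (ent_d (m l)).+1 else 0.
Proof. by rewrite /incr; case: (m l) => [[[v d] p]|]. Qed.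

Lemma dom_append m (B : {set 'I_N}) (rv : 'I_N -> R) (rd : 'I_N -> nat) k : dom (append m B rv rd k) = dom m :|: B.
Proof.
apply/setP => l; rewrite !inE /append; case: (l \in B); rewrite ?orbT ?orbF //.
Qed.

Lemma ent_d_incr_in m l : l \in dom m -> ent_d (incr m l) = (ent_d (m l)).+1.
Proof. by rewrite in_dom ent_d_incr; case: (m l). Qed.

Definition EntB k m := forall l, l \in dom m -> ent_d (m l) <= k.

Lemma EntB_append k m (B : {set 'I_N}) (rv : 'I_N -> R) (rd : 'I_N -> nat) :
  EntB k m -> (forall l, l \in B -> rd l <= k) -> EntB k (append m B rv rd k).
Proof.
move=> Hm HB l; rewrite dom_append inE /append.
case: ifP => [/HB //|_]; rewrite orbF; exact: Hm.
Qed.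

Lemma EntB_incr k m : EntB k m -> EntB k.+1 (incr m).
Proof.
move=> Hm l; rewrite dom_incr => Hl; rewrite ent_d_incr.
move: (Hl); rewrite in_dom; case E: (m l) => [e|] // _.
by rewrite -E ltnS Hm.
Qed.

Definition Bprop m t :=
  forall d, t = Some d -> #|dom m| = (2 * f).+1 /\
    forall e, (forall l, l \in dom m -> ent_d (m l) <= e) -> d <= e.

Lemma Bprop_filt m1 : #|dom m1| = (2 * f).+1 -> Bprop (incr m1) (filt_tau m1).
Proof.
move=> Hc d [<-]; rewrite dom_incr; split => // e He.
have : 0 < #|dom m1| by rewrite Hc.
case/card_gt0P => l0 Hl0.
have := He l0 => /(_ Hl0); rewrite ent_d_incr_in // => H0.
have Hle : \max_(l in dom m1) ent_d (m1 l) <= e.-1.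
  apply/bigmax_leqP => l Hl; have := He l => /(_ Hl).
  rewrite ent_d_incr_in //; lia.
apply: (leq_ltn_trans Hle); lia.
Qed.

Lemma cardsU_disj (A B : {set 'I_N}) : B \subset ~: A -> #|A :|: B| = #|A| + #|B|.
Proof.
move=> H; rewrite cardsU.
have -> : A :&: B = set0.
  apply/setP => x; rewrite !inE; case Ha: (x \in A) => //=.
  apply/negbTE/negP => Hb; move/subsetP: H => /(_ x Hb); by rewrite inE Ha.
by rewrite cards0 subn0.
Qed.

Lemma step_inv k (J : {set 'I_N}) (rv : 'I_N -> R) (rd : 'I_N -> nat) x t m x' t' m' :
  (forall l, l \in J -> rd l <= k) ->
  nonsource_step a f k J rv rd x t m x' t' m' ->
  EntB k m -> (t = None -> #|dom m| <= 2 * f) ->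
  [/\ EntB k.+1 m', (t' = None -> #|dom m'| <= 2 * f), Bprop m' t',
      (t <> None -> t' <> None) &
      (t = None -> t' = None -> dom m :|: J \subset dom m')].
Proof.
move=> HJ; case: t => [d|] /=.
- case=> K [HKC HKc HKo] /= [Hm' Ht' _] HE _.
  set m0 := append m _ rv rd k in HKC HKo Hm' Ht'.
  set m1 := (fun l => _) in Hm' Ht'.
  have Hdm1 : dom m1 = K.
    apply/setP => l; rewrite [in LHS]inE /m1; case: ifP => // HK.
    by case: ifP => //; rewrite in_dom.
  have HE0 : EntB k m0.
    apply: EntB_append => // l; rewrite inE => /andP [/setIP [/HJ ? _] _] //.
  have HE1 : EntB k m1.
    move=> l; rewrite Hdm1 => HlK; rewrite /m1 HlK.
    case: ifP => [/HE0 //|Hn]; apply: HJ.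
    by move/subsetP: HKC => /(_ l HlK); rewrite inE Hn.
  subst m' t'; split => //.
  + exact: EntB_incr.
  + by apply: Bprop_filt; rewrite Hdm1.
- case: ifP => Hlt.
  + move=> [Hm' Ht' _] HE Hc; subst m' t'; split => //.
    * apply/EntB_incr/EntB_append => // l; rewrite inE => /andP [_ /HJ] //.
    * move=> _; rewrite dom_incr dom_append cardsU_disj; last first.
        by apply/subsetP => l; rewrite !inE => /andP [].
      exact: Hlt.
    * move=> _ _; apply/subsetP => l; rewrite dom_incr dom_append !inE.
      by case: (m l != None).
  + case=> B [HB HBc HBo /= [Hm' Ht' _]] HE Hc; subst m' t'; split => //.
    * apply/EntB_incr/EntB_append => // l Hl; apply: HJ.
      by move/subsetP: HB => /(_ l Hl); rewrite inE => /andP [].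
    * apply: Bprop_filt; rewrite dom_append cardsU_disj ?HBc; last first.
        apply/subsetP => l Hl; move/subsetP: HB => /(_ l Hl).
        by rewrite !inE => /andP [].
      move: (Hc erefl) => Hc2; clear -Hc2; change (2 * f)%R with (2 * f)%N; set n := #|dom m| in Hc2 *; lia.
Qed.

Definition Qs s k m := [set l in dom m | ent_d (m l) + s <= k].

Lemma some_step_fresh s k (J : {set 'I_N}) (rv : 'I_N -> R) (rd : 'I_N -> nat) x d m x' t' m' :
  nonsource_step a f k J rv rd x (Some d) m x' t' m' ->
  (dom m' \subset Qs s k.+1 m') \/
  (forall l, (l \in Qs s k m) || ((l \in J) && (rd l + s <= k)) -> l \in Qs s k.+1 m').
Proof.
case=> K [HKC HKc HKo] /= [Hm' _ _].
set P := [set l in J :&: dom m | rd l < ent_d (m l)] in HKC HKo Hm'.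
set m0 := append m P rv rd k in HKC HKo Hm'.
set m1 := (fun l => _) in Hm'.
subst m'.
pose idx l := if l \in dom m0 then ent_d (m0 l) else rd l.
have Hdm0 : dom m0 = dom m.
  rewrite /m0 dom_append; apply/setP => l; rewrite !inE.
  by case: (m l != None) => //=; rewrite andbF.
have Hm1K : forall l, l \in K -> l \in dom m1 /\ ent_d (m1 l) = idx l.
  move=> l Hl; rewrite in_dom /m1 /idx Hl; case: ifP => //.
  by rewrite in_dom.
have Hgood : forall l, (l \in Qs s k m) || ((l \in J) && (rd l + s <= k)) ->
    l \in dom m0 :|: J /\ idx l + s <= k.
  move=> l; rewrite /idx Hdm0 /m0 /append !inE.
  case Hdl: (m l != None) => /=.
  - case: ifP => [|HnP]; rewrite ?inE => /=.
    + move=> /andP [/andP [_ _] Hlt] /orP [H|/andP [_ H]]; split => //; lia.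
    + move=> /orP [H|/andP [HlJ Hrd]]; split => //.
      move: HnP; rewrite HlJ /= => /negbT; rewrite -leqNgt => H; lia.
  - by move=> /andP [HlJ Hrd].
case: (boolP [exists l, (l \in (dom m0 :|: J) :\: K) && (idx l + s <= k)]).
- move=> /existsP [y /andP [Hy Hys]]; left.
  apply/subsetP => l; rewrite dom_incr => Hl.
  have HlK : l \in K.
    by move: Hl; rewrite in_dom /m1; case: (l \in K).
  have [_ He] := Hm1K l HlK.
  rewrite inE dom_incr Hl /= ent_d_incr_in // He.
  have := HKo l y HlK Hy; rewrite -/(idx l) -/(idx y); lia.
- rewrite negb_exists => /forallP Hn; right => l Hg.
  have [HC Hi] := Hgood l Hg.
  have HlK : l \in K.
    apply/negPn/negP => HnK; have := Hn l; rewrite !inE HnK /=.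
    by move: HC; rewrite inE -in_dom => -> /=; rewrite Hi.
  have [Hd He] := Hm1K l HlK.
  rewrite inE dom_incr Hd /= ent_d_incr_in // He; lia.
Qed.

End Gen.
Section Count.
Variables (N : nat) (S : {set 'I_N}) (W : nat -> {set 'I_N}) (T p : nat).
Local Open Scope nat_scope.
Hypothesis Hmono : forall t, p * T <= t -> W t.+1 \subset W t.
Hypothesis HS : forall t, W t \subset ~: S.
Hypothesis Hkey : forall q, p <= q -> W (q.+1 * T) != set0 -> W (q * T) != W (q.+1 * T).

Lemma mono_le t1 t2 : p * T <= t1 -> t1 <= t2 -> W t2 \subset W t1.
Proof.
move=> H1 /subnK <-; elim: (t2 - t1) => [|j IH]; first by rewrite add0n.
rewrite addSn; apply: subset_trans IH; apply: Hmono; lia.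
Qed.

Lemma count_empty : W ((p + #|~: S|) * T) = set0.
Proof.
have H : forall j, W ((p + j) * T) = set0 \/ #|W ((p + j) * T)| + j <= #|~: S|.
  elim=> [|j [IH|IH]].
  - right; rewrite addn0; exact: subset_leq_card.
  - left; apply/eqP; rewrite -subset0 -IH; apply: mono_le; nia.
  - case: (eqVneq (W ((p + j.+1) * T)) set0) => [->|Hne]; first by left.
    right.
    have Hsub : W ((p + j.+1) * T) \subset W ((p + j) * T) by apply: mono_le; nia.
    have Hneq : W ((p + j) * T) != W ((p + j).+1 * T).
      apply: Hkey; first by lia. by rewrite -addnS.
    have Hpr : W ((p + j.+1) * T) \proper W ((p + j) * T).
      rewrite properEneq Hsub andbT eq_sym; by rewrite -addnS in Hneq.
    have := proper_card Hpr.
    set x := #|W _|; set y := #|W _|; lia.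
have [//|] := H #|~: S|.
set x := #|W _| => Hx; apply/eqP; rewrite -cards_eq0; apply/eqP; lia.
Qed.
End Count.
Section Exec.
Variables (R : realFieldType) (N f : nat) (a : R) (c L : 'I_N -> R)
    (G : nat -> rel 'I_N) (Adv : {set 'I_N}) (xs : nat -> R)
    (msgs : nat -> 'I_N -> 'I_N -> message R)
    (xh : 'I_N -> nat -> R) (tau : 'I_N -> nat -> option nat)
    (mem : 'I_N -> nat -> memory R N).
Hypothesis Hex : execution f a c L G Adv xs msgs xh tau mem.
Local Open Scope nat_scope.

Notation J k i := (Jset G msgs k i).
Notation rd k i := (fun l => rep_d (msgs k l i)).

Lemma J_bound k i l : l \in J k i -> rep_d (msgs k l i) <= k.
Proof.
rewrite inE => /andP [_]; rewrite /rep_d; by case: (reported _) => [[v d]|].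
Qed.

Lemma reg_in_J k l i d : l \notin Adv -> l \in in_nbrs (G k) i ->
  tau l k = Some d -> d <= k -> l \in J k i /\ rep_d (msgs k l i) = d.
Proof.
case: Hex => _ Hm _ _ _ Hl Hn Ht Hd.
rewrite /Jset inE Hn /= (Hm _ _ _ Hl Hn) Ht /= /rep_d /=; split => //.
Qed.

Lemma step_i i k : i \notin Adv -> c i == 0%R ->
  nonsource_step a f k (J k i) (fun l => rep_v (msgs k l i)) (rd k i)
    (xh i k) (tau i k) (mem i k) (xh i k.+1) (tau i k.+1) (mem i k.+1).
Proof. by case: Hex => _ _ _ _ H Ha Hc; apply: H. Qed.

Lemma inv_ns i : i \notin Adv -> c i == 0%R -> forall k,
  [/\ EntB k (mem i k), (tau i k = None -> #|dom (mem i k)| <= 2 * f) &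
      Bprop f (mem i k) (tau i k)].
Proof.
move=> Ha Hc; case: Hex => _ _ _ H0 _; have [Ht0 Hm0] := H0 i Ha Hc.
elim=> [|k [IH1 IH2 IH3]].
- have Hd : dom (mem i 0) = set0 by apply/setP => l; rewrite Hm0 !inE.
  rewrite Ht0; split => //.
  + by move=> l; rewrite Hd inE.
  + by rewrite Hd cards0.
have [H1 H2 H3 _ _] := step_inv (@J_bound k i) (step_i k Ha Hc) IH1 IH2.
by split.
Qed.

Lemma tau_le l k d : l \notin Adv -> tau l k = Some d -> d <= k.
Proof.
move=> Ha Ht; case: (eqVneq (c l) 0%R) => Hc.
- have [HE _ HB] := inv_ns Ha (introT eqP Hc) k.
  have [_ He] := HB d Ht; exact: He.
- case: Hex => _ _ Hs _ _; have [Ht' _] := Hs l Ha Hc k.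
  by move: Ht; rewrite Ht' => -[<-].
Qed.

Lemma tau_mono l k : l \notin Adv -> tau l k <> None -> tau l k.+1 <> None.
Proof.
move=> Ha; case: (eqVneq (c l) 0%R) => Hc.
- have [HE H2 _] := inv_ns Ha (introT eqP Hc) k.
  have [_ _ _ H _] := step_inv (@J_bound k l) (step_i k Ha (introT eqP Hc)) HE H2.
  exact: H.
- case: Hex => _ _ Hs _ _; by rewrite (proj1 (Hs l Ha Hc k.+1)).
Qed.

Lemma tau_mono_le l k1 k2 : l \notin Adv -> k1 <= k2 -> tau l k1 <> None -> tau l k2 <> None.
Proof.
move=> Ha /subnK <-; elim: (k2 - k1) => [|j IH] H; first by rewrite add0n.
rewrite addSn; apply: tau_mono => //; exact: IH.
Qed.

Variable T : nat.
Hypothesis HR : forall m, strongly_robust (union_graph G (m * T) T) (sources c) (3 * f).+1.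
Hypothesis HAdv : #|Adv| <= f.

Lemma robust_pick (W : {set 'I_N}) q : W != set0 -> W \subset ~: sources c ->
  exists2 i, i \in W & exists Z : {set 'I_N}, [/\ (2 * f).+1 <= #|Z|, Z \subset ~: Adv,
     Z \subset ~: W & forall z, z \in Z -> exists2 u, q * T <= u < q * T + T &
        z \in in_nbrs (G u) i].
Proof.
move=> Hne HS; have := HR q Hne HS; case/existsP => i /andP [HiW Hcard].
exists i => //.
set A := in_nbrs _ i :\: W in Hcard.
exists (A :\: Adv); split.
- rewrite cardsD.
  have : #|A :&: Adv| <= #|Adv| by apply: subset_leq_card; apply: subsetIr.
  set x := #|A|; set y := #|A :&: Adv|; set z := #|Adv|; lia.
- by apply/subsetP => z; rewrite !inE => /andP [].
- by apply/subsetP => z; rewrite !inE => /andP [_ /andP []].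
- move=> z; rewrite !inE => /andP [_ /andP [_ /andP [Hzi]]].
  rewrite /union_graph => /hasP [u]; rewrite mem_iota => Hu Hg.
  by exists u => //; rewrite inE Hzi.
Qed.

Definition W1 t := [set j | (j \notin Adv) && (c j == 0%R) && (tau j t == None)].

Lemma W1S t : W1 t \subset ~: sources c.
Proof. by apply/subsetP => j; rewrite !inE => /andP [/andP [_ ->]]. Qed.

Lemma reg_some_after l t0 t : l \notin Adv -> l \notin W1 t0 -> t0 <= t -> tau l t <> None.
Proof.
move=> Ha Hn Ht; case: (eqVneq (c l) 0%R) => Hc.
- apply: (tau_mono_le Ha Ht); move: Hn; rewrite !inE Ha Hc eqxx /=.
  by move=> /eqP.
- case: Hex => _ _ Hs _ _; by rewrite (proj1 (Hs l Ha Hc t)).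
Qed.

Lemma key1 q : W1 (q.+1 * T) != set0 -> W1 (q * T) != W1 (q.+1 * T).
Proof.
move=> Hne; apply/negP => /eqP Heq.
have [i HiW [Z [HZc HZA HZW HZu]]] := robust_pick q Hne (W1S _).
move: (HiW); rewrite inE => /andP [/andP [Ha Hc] /eqP Hti].
rewrite mulSnr in Hti.
have Hnone : forall t, t <= q * T + T -> tau i t = None.
  move=> t Ht; case E: (tau i t) => [d|] //.
  have : tau i t <> None by rewrite E.
  by move/(tau_mono_le Ha Ht); rewrite Hti.
have Hinv : forall j, j <= T -> forall z, z \in Z -> forall u, q * T <= u < q * T + j ->
    z \in in_nbrs (G u) i -> z \in dom (mem i (q * T + j)).
  elim=> [|j IH] Hj z Hz u Hu Hzu; first by clear -Hu; lia.
  have [HE HC _] := inv_ns Ha Hc (q * T + j).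
  have [_ _ _ _ Hsub] := step_inv (@J_bound _ i) (step_i (q * T + j) Ha Hc) HE HC.
  have := Hsub (Hnone (q * T + j) (ltac:(clear -Hj; lia))) (Hnone (q * T + j).+1 (ltac:(clear -Hj; lia))).
  rewrite addnS => /subsetP; apply; rewrite inE.
  case: (ltnP u (q * T + j)) => Hu2.
  - by rewrite (IH (ltnW Hj) z Hz u (ltac:(clear -Hu Hu2; lia)) Hzu).
  - have Hzeq : u = q * T + j by clear -Hu Hu2; lia.
    subst u.
    have HzA : z \notin Adv by move/subsetP: HZA => /(_ z Hz); rewrite inE.
    have HzW : z \notin W1 (q * T).
      by move/subsetP: HZW => /(_ z Hz); rewrite inE Heq.
    have Hs := reg_some_after HzA HzW (leq_addr j (q * T)).
    case E: (tau z (q * T + j)) Hs => [d|] // _.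
    have [HJ _] := reg_in_J HzA Hzu E (tau_le HzA E).
    by rewrite HJ orbT.
have Hsub : Z \subset dom (mem i (q * T + T)).
  apply/subsetP => z Hz; have [u Hu Hzu] := HZu z Hz.
  exact: (Hinv T (leqnn T) z Hz u Hu Hzu).
have [_ HC _] := inv_ns Ha Hc (q * T + T).
have := HC (Hnone _ (leqnn _)); have := subset_leq_card Hsub.
set x := #|Z| in HZc *; set y := #|dom _|; clearbody x y; move=> H1 H2; clear -H1 H2 HZc; lia.
Qed.

Lemma W1_mono t : W1 t.+1 \subset W1 t.
Proof.
apply/subsetP => j; rewrite !inE => /andP [/andP [Hj Hc] /eqP Ht].
rewrite Hj Hc /=; apply/eqP; case E: (tau j t) => [d|] //.
have : tau j t <> None by rewrite E.
by move/(tau_mono Hj).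
Qed.

Lemma part1 i k : i \notin Adv -> #|~: sources c| * T <= k -> tau i k <> None.
Proof.
move=> Ha Hk.
have H0 := @count_empty N (sources c) W1 T 0 (fun t _ => W1_mono t) W1S (fun q _ => key1 (q := q)).
rewrite add0n in H0.
have Hn : i \notin W1 (#|~: sources c| * T) by rewrite H0 inE.
exact: reg_some_after Ha Hn Hk.
Qed.

Definition Full s t j := (2 * f).+1 <= #|Qs s t (mem j t)|.

Lemma Qs_sub s t (m : memory R N) : Qs s t m \subset dom m.
Proof. by apply/subsetP => l; rewrite inE => /andP []. Qed.

Lemma Full_tau s t j d : j \notin Adv -> c j == 0%R -> Full s t j -> tau j t = Some d -> d + s <= t.
Proof.
move=> Ha Hc HF Ht; have [_ _ HB] := inv_ns Ha Hc t.
have [Hcd He] := HB d Ht.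
have Heq : Qs s t (mem j t) == dom (mem j t).
  rewrite eqEcard Qs_sub /= Hcd; exact: HF.
have : 0 < #|Qs s t (mem j t)| by move: HF; rewrite /Full; set x := #|_|; lia.
case/card_gt0P => l0; rewrite inE => /andP [_ Hl0].
have := He (t - s); rewrite -(eqP Heq).
have H : forall l, l \in Qs s t (mem j t) -> ent_d (mem j t l) <= t - s.
  by move=> l; rewrite inE => /andP [_ H]; lia.
move/(_ H); lia.
Qed.

Lemma Full_mono s t j : j \notin Adv -> c j == 0%R -> #|~: sources c| * T <= t ->
  Full s t j -> Full s t.+1 j.
Proof.
move=> Ha Hc Ht HF.
case E: (tau j t) (part1 Ha Ht) => [d|] // _.
have Hst := step_i t Ha Hc; rewrite E in Hst.
have [_ _ HB] := inv_ns Ha Hc t.+1.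
case E1: (tau j t.+1) (part1 Ha (leqW Ht)) => [d1|] // _.
have [Hcd _] := HB d1 E1.
case: (some_step_fresh s Hst) => [Hsub|Hsub].
- rewrite /Full -Hcd; exact: subset_leq_card.
- apply: (leq_trans HF); apply: subset_leq_card; apply/subsetP => l Hl.
  by apply: Hsub; rewrite Hl.
Qed.

Variable p : nat.
Hypothesis Hp : #|~: sources c| <= p.
Let s := p * T.

Lemma nT_le_s : #|~: sources c| * T <= s.
Proof. exact: leq_mul. Qed.

Definition W2 t := [set j | (j \notin Adv) && (c j == 0%R) && ~~ Full s t j].

Lemma W2S t : W2 t \subset ~: sources c.
Proof. by apply/subsetP => j; rewrite !inE => /andP [/andP [_ ->]]. Qed.

Lemma W2_mono t : p * T <= t -> W2 t.+1 \subset W2 t.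
Proof.
move=> Ht; apply/subsetP => j; rewrite !inE => /andP [/andP [Hj Hc] HF].
rewrite Hj Hc /=; apply/negP => HF2; move/negP: HF; apply.
apply: Full_mono => //; apply: leq_trans nT_le_s Ht.
Qed.

Lemma Full_mono_le t0 t j : j \notin Adv -> c j == 0%R -> s <= t0 -> t0 <= t ->
  Full s t0 j -> Full s t j.
Proof.
move=> Ha Hc Hs /subnK <-; elim: (t - t0) => [|m IH] H; first by rewrite add0n.
rewrite addSn; apply: Full_mono => //; last exact: IH.
apply: leq_trans nT_le_s _; clear -Hs; lia.
Qed.

Lemma good_sender z t0 u : z \notin Adv -> z \notin W2 t0 -> s <= t0 -> t0 <= u ->
  exists2 d, tau z u = Some d & d + s <= u.
Proof.
move=> Ha Hn Hs Hu; case: (eqVneq (c z) 0%R) => Hc.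
- have HF : Full s t0 z.
    by move: Hn; rewrite !inE Ha Hc eqxx /= negbK.
  have HFu := Full_mono_le Ha (introT eqP Hc) Hs Hu HF.
  case E: (tau z u) (part1 Ha (leq_trans nT_le_s (leq_trans Hs Hu))) => [d|] // _.
  by exists d => //; exact: (Full_tau Ha (introT eqP Hc) HFu E).
- case: Hex => _ _ Hsrc _ _; rewrite (proj1 (Hsrc z Ha Hc u)).
  by exists 0 => //; lia.
Qed.

Lemma key2 q : p <= q -> W2 (q.+1 * T) != set0 -> W2 (q * T) != W2 (q.+1 * T).
Proof.
move=> Hpq Hne; apply/negP => /eqP Heq.
have [i HiW [Z [HZc HZA HZW HZu]]] := robust_pick q Hne (W2S _).
move: (HiW); rewrite inE => /andP [/andP [Ha Hc] HnF].
rewrite mulSnr in HnF.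
have HsqT : s <= q * T by apply: leq_mul.
have Hinv : forall j, j <= T -> Full s (q * T + j) i \/
    forall z, z \in Z -> forall u, q * T <= u < q * T + j ->
    z \in in_nbrs (G u) i -> z \in Qs s (q * T + j) (mem i (q * T + j)).
  elim=> [|j IH] Hj.
  - by right => z _ u Hu; clear -Hu; lia.
  have Ht : #|~: sources c| * T <= q * T + j.
    apply: leq_trans nT_le_s _; clear -HsqT; lia.
  have [IHF|IHs] := IH (ltnW Hj).
  - by left; rewrite addnS; apply: Full_mono.
  case E: (tau i (q * T + j)) (part1 Ha Ht) => [d|] // _.
  have Hst := step_i (q * T + j) Ha Hc; rewrite E in Hst.
  have [_ _ HB] := inv_ns Ha Hc (q * T + j).+1.
  case E1: (tau i (q * T + j).+1) (part1 Ha (leqW Ht)) => [d1|] // _.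
  have [Hcd _] := HB d1 E1.
  rewrite addnS.
  case: (some_step_fresh s Hst) => [Hsub|Hsub].
  - left; rewrite /Full -Hcd; exact: subset_leq_card.
  - right => z Hz u Hu Hzu; apply: Hsub.
    case: (ltnP u (q * T + j)) => Hu2.
    + by rewrite (IHs z Hz u (ltac:(clear -Hu Hu2; lia)) Hzu).
    + have Hzeq : u = q * T + j by clear -Hu Hu2; lia.
      subst u.
      have HzA : z \notin Adv by move/subsetP: HZA => /(_ z Hz); rewrite inE.
      have HzW : z \notin W2 (q * T).
        by move/subsetP: HZW => /(_ z Hz); rewrite inE Heq.
      have [dz Ez Hdz] := good_sender HzA HzW HsqT (leq_addr j (q * T)).
      have [HJ Hrd] := reg_in_J HzA Hzu Ez (tau_le HzA Ez).
      by rewrite HJ Hrd Hdz orbT.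
have HF : Full s (q * T + T) i.
  have [//|Hs] := Hinv T (leqnn T).
  have Hsub : Z \subset Qs s (q * T + T) (mem i (q * T + T)).
    apply/subsetP => z Hz; have [u Hu Hzu] := HZu z Hz.
    exact: (Hs z Hz u Hu Hzu).
  apply: leq_trans HZc _; exact: subset_leq_card.
by rewrite HF in HnF.
Qed.

Lemma W2_empty : W2 ((p + #|~: sources c|) * T) = set0.
Proof. exact: (@count_empty N (sources c) W2 T p W2_mono W2S key2). Qed.

End Exec.
Theorem lemma6 (R : realFieldType) (N f : nat) (a : R) (c L : 'I_N -> R)
    (G : nat -> rel 'I_N) (T : nat) :
  jointly_strongly_robust_with G (sources c) (3 * f).+1 T ->
  forall (Adv : {set 'I_N}), (#|Adv| <= f)%N ->
  forall (xs : nat -> R) (msgs : nat -> 'I_N -> 'I_N -> message R)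
         (xh : 'I_N -> nat -> R) (tau : 'I_N -> nat -> option nat)
         (mem : 'I_N -> nat -> memory R N),
  execution f a c L G Adv xs msgs xh tau mem ->
  forall i : 'I_N, i \notin Adv ->
  forall k : nat, ((N - #|sources c|) * T <= k)%N ->
    tau i k <> None /\
    (forall d : nat, tau i k = Some d ->
       (d <= 2 * ((N - #|sources c|) * T))%N).
Proof.
move=> [HT HR] Adv HA xs msgs xh tau mem Hex i Ha k Hk.
have Hn : #|~: sources c| = (N - #|sources c|)%N.
  by rewrite cardsCs card_ord setCK.
rewrite -Hn in Hk *.
split; first exact: (part1 Hex HR HA Ha Hk).
move=> d Hd.
case: (eqVneq (c i) 0%R) => Hc; last first.
  case: Hex => _ _ Hs _ _; move: Hd; rewrite (proj1 (Hs i Ha Hc k)) => -[<-].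
  by [].
have Hn0 : (0 < #|~: sources c|)%N.
  by apply/card_gt0P; exists i; rewrite !inE Hc eqxx.
set n := #|~: sources c| in Hk Hn0 *.
case: (leqP (2 * (n * T)) k) => Hk2; last first.
  have := tau_le Hex Ha Hd; clear -Hk2; lia.
set Q := (k %/ T)%N.
have HQ : (2 * n <= Q)%N by rewrite /Q leq_divRL // -mulnA.
have Hp : (n <= Q - n)%N by clear -HQ; lia.
have H0 := W2_empty Hex HR HA Hp.
have HQn : (Q - n + n = Q)%N by clear -HQ; lia.
rewrite /n HQn in H0.
have HiW : i \notin W2 f c Adv mem T (Q - n) (Q * T) by rewrite H0 inE.
have HF : Full f mem ((Q - n) * T) (Q * T) i.
  move: HiW; rewrite !inE Ha Hc eqxx /=. by move/negPn.
have Hk' : (Q * T <= k)%N by rewrite /Q leq_trunc_div.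
have HF2 := Full_mono_le Hex HR HA Hp Ha (introT eqP Hc) (leq_mul (leq_subr n Q) (leqnn T)) Hk' HF.
have Hdk := Full_tau Hex HA Ha (introT eqP Hc) HF2 Hd.
have Hdiv : k = (Q * T + k %% T)%N by rewrite /Q -divn_eq.
have Hmod : (k %% T < T)%N by rewrite ltn_pmod.
have HnT : (T <= n * T)%N by rewrite leq_pmull.
rewrite mulnBl in Hdk.
clear -Hdk Hdiv Hmod HnT Hk2; move: Hdk Hdiv Hmod HnT Hk2; set QT := (Q * T)%N; set nT := (n * T)%N; set r := (k %% T)%N.
clearbody QT nT r; lia.
Qed.
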